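(* There exist six hyperplanes $W_1,\dots,W_6\subset\mathbb R^4$ which do phase retrieval on $\mathbb R^4$, but such that the one-dimensional subspaces $\{W_i^\perp\}_{i=1}^6$ do not do phase retrieval on $\mathbb R^4$.
   Context: A hyperplane in $\mathbb R^4$ is a 3-dimensional subspace. A family of subspaces $\{W_i\}$ with orthogonal projections $P_i$ does phase retrieval if whenever $x,y\in\mathbb R^4$ satisfy $\|P_ix\|=\|P_iy\|$ for all $i$, then $x=\pm y$. *)

(* Defs.v *)
From HB Require Import structures.
From mathcomp Require Import all_boot all_order all_algebra.
From mathcomp Require Import reals.
Set Implicit Arguments. Unset Strict Implicit. Unset Printing Implicit Defensive.
Import Order.TTheory GRing.Theory Num.Theory.
Local Open Scope ring_scope.

(* Vectors of R^n are row vectors 'rV[R]_n with the standard inner product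
   <x, y> = x *m y^T.  A subspace of R^n is represented by a matrix whose
   ROW SPACE is that subspace (mxalgebra convention). *)

Section PR.
Variable R : rcfType.

Definition vnorm (n : nat) (x : 'rV[R]_n) : R := Num.sqrt (\sum_(i < n) x 0 i ^+ 2).

(* Matrix (acting on row vectors by right multiplication) of the orthogonal
   projection onto the row space of W:  P = B^T (B B^T)^{-1} B, where B is a
   basis (row_base) of the row space of W. *)
Definition orth_proj (m n : nat) (W : 'M[R]_(m, n)) : 'M[R]_n :=
  let B := row_base W in B^T *m invmx (B *m B^T) *m B.

Definition orth_compl (m n : nat) (W : 'M[R]_(m, n)) : 'M[R]_n := kermx W^T.

Definition does_phase_retrieval (I : finType) (m n : nat) (W : I -> 'M[R]_(m, n)) : Prop :=
  forall x y : 'rV[R]_n,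
    (forall i, vnorm (x *m orth_proj (W i)) = vnorm (y *m orth_proj (W i))) ->
    x = y \/ x = - y.
End PR.

(* Main.v *)
Require Import Defs.
From HB Require Import structures.
From mathcomp Require Import all_boot all_order all_algebra.
From mathcomp Require Import reals.
From mathcomp.algebra_tactics Require Import ring lra.
From mathcomp.zify Require Import zify.
Import Order.TTheory GRing.Theory Num.Theory.
Local Open Scope ring_scope.
Set Implicit Arguments.
Unset Strict Implicit.
Unset Printing Implicit Defensive.

Lemma rV_sq_eq0 (R : rcfType) (k : nat) (z : 'rV[R]_k) : z *m z^T = 0 -> z = 0.
Proof.
move=> h; have := congr1 (fun M : 'M_1 => M 0 0) h; rewrite !mxE /= => hs.
have hz j : z 0 j * z^T j 0 = 0.
  by apply: (psumr_eq0P _ hs) => // i _; rewrite mxE; exact: sqr_ge0.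
apply/rowP => j; rewrite mxE.
have := hz j; rewrite mxE => /eqP; rewrite mulf_eq0 orbb => /eqP //.
Qed.

Lemma orth_proj_split (R : rcfType) m n (W : 'M[R]_(m,n)) (x a b : 'rV[R]_n) :
  (a <= W)%MS -> b *m W^T = 0 -> x = a + b -> x *m orth_proj W = a.
Proof.
move=> aW bW ->; rewrite /orth_proj.
set B := row_base W.
have aB : (a <= B)%MS by rewrite eq_row_base.
have BW : (B <= W)%MS by rewrite eq_row_base.
have [u ->] := submxP aB.
have [D hD] := submxP BW.
have bB : b *m B^T = 0 by rewrite hD trmx_mul mulmxA bW mul0mx.
have GU : B *m B^T \in unitmx.
  rewrite -row_free_unit -kermx_eq0; apply/eqP/row_matrixP => i.
  rewrite row0; set r := row i _.
  have rG : r *m (B *m B^T) = 0 by rewrite /r -row_mul mulmx_ker row0.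
  have rB : r *m B = 0.
    apply: rV_sq_eq0; rewrite trmx_mul mulmxA -(mulmxA r) rG.
    by rewrite mul0mx.
  apply: (row_free_inj (row_base_free W)); by rewrite rB mul0mx.
clearbody B.
rewrite mulmxDl !mulmxA bB !mul0mx addr0 -(mulmxA u) mulmxK //.
Qed.

Definition dotv (R : rcfType) k (x y : 'rV[R]_k) : R := (x *m y^T) 0 0.
Definition Wof (R : rcfType) k (n : 'rV[R]_k) : 'M[R]_k := (dotv n n)%:M - n^T *m n.

Lemma mulmx_tr_dot (R : rcfType) k (x y : 'rV[R]_k) : x *m y^T *m y = dotv x y *: y.
Proof. by rewrite [x *m y^T]mx11_scalar mul_scalar_mx. Qed.

Lemma Wof_tr (R : rcfType) k (n : 'rV[R]_k) : (Wof n)^T = Wof n.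
Proof. by rewrite /Wof linearB /= tr_scalar_mx trmx_mul trmxK. Qed.

Lemma mul_Wof (R : rcfType) k (n x : 'rV[R]_k) :
  x *m Wof n = dotv n n *: x - dotv x n *: n.
Proof. by rewrite /Wof mulmxBr mul_mx_scalar mulmxA mulmx_tr_dot. Qed.

Lemma n_Wof (R : rcfType) k (n : 'rV[R]_k) : n *m Wof n = 0.
Proof. by rewrite mul_Wof subrr. Qed.

Lemma dotv_gt0 (R : rcfType) k (n : 'rV[R]_k) : n != 0 -> 0 < dotv n n.
Proof.
move=> nz; rewrite lt_def; apply/andP; split.
  apply/eqP => h; move/eqP: nz; apply; apply: rV_sq_eq0.
  by rewrite [n *m n^T]mx11_scalar -/(dotv n n) h -scalemx1 scale0r.
rewrite /dotv mxE; apply: sumr_ge0 => i _; rewrite mxE; exact: sqr_ge0.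
Qed.

Lemma kermx_Wof (R : rcfType) k (n : 'rV[R]_k) : n != 0 -> (kermx (Wof n) :=: n)%MS.
Proof.
move=> nz; apply/eqmxP; rewrite andbC; apply/andP; split.
  by apply/sub_kermxP; exact: n_Wof.
have h := mulmx_ker (Wof n).
have d0 : dotv n n != 0 by rewrite gt_eqF // dotv_gt0.
have -> : kermx (Wof n) = (dotv n n)^-1 *: (kermx (Wof n) *m n^T *m n).
  move: h; rewrite /Wof mulmxBr mul_mx_scalar mulmxA => /eqP; rewrite subr_eq0 => /eqP <-.
  by rewrite scalerA mulVf // scale1r.
by rewrite scalemx_sub // submxMl.
Qed.

Lemma rank_Wof (R : rcfType) k (n : 'rV[R]_k) : n != 0 -> \rank (Wof n) = k.-1.
Proof.
move=> nz; have := mxrank_ker (Wof n); rewrite kermx_Wof // rank_rV nz.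
have := rank_leq_row (Wof n); case: k n nz => [|k] n nz /=.
  by move: nz; rewrite (thinmx0 n) eqxx.
move: (\rank (Wof n)) => r le h /=; lia.
Qed.

Lemma Wof_sub (R : rcfType) k (n x : 'rV[R]_k) : n != 0 ->
  x - (dotv x n / dotv n n) *: n = (dotv n n)^-1 *: (x *m Wof n).
Proof.
move=> nz; have d0 : dotv n n != 0 by rewrite gt_eqF // dotv_gt0.
by rewrite mul_Wof scalerBr !scalerA mulVf // scale1r mulrC.
Qed.

Lemma proj_hyper (R : rcfType) k (n x : 'rV[R]_k) : n != 0 ->
  x *m orth_proj (Wof n) = x - (dotv x n / dotv n n) *: n.
Proof.
move=> nz; apply: (orth_proj_split (b := (dotv x n / dotv n n) *: n)).
- by rewrite Wof_sub // scalemx_sub // submxMl.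
- by rewrite Wof_tr -scalemxAl n_Wof scaler0.
- by rewrite subrK.
Qed.

Lemma proj_line (R : rcfType) k (n x : 'rV[R]_k) : n != 0 ->
  x *m orth_proj (orth_compl (Wof n)) = (dotv x n / dotv n n) *: n.
Proof.
move=> nz; rewrite /orth_compl Wof_tr.
apply: (orth_proj_split (b := x - (dotv x n / dotv n n) *: n)).
- by rewrite scalemx_sub //; apply/sub_kermxP; exact: n_Wof.
- rewrite Wof_sub // -scalemxAl -mulmxA.
  have -> : Wof n *m (kermx (Wof n))^T = 0.
    by have := congr1 trmx (mulmx_ker (Wof n)); rewrite trmx_mul Wof_tr trmx0.
  by rewrite mulmx0 scaler0.
- by rewrite addrC subrK.
Qed.

Lemma prod4_eq0 (R : rcfType) (p1 p2 b1 b2 : R) :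
  p1 * b1 = 0 -> p2 * b2 = 0 -> p1 * b2 + p2 * b1 = 0 ->
  (p1 = 0 /\ p2 = 0) \/ (b1 = 0 /\ b2 = 0).
Proof.
move=> h1 h2 h3.
have h4 : p1 * b2 = 0.
  have : (p1 * b2)^+2 = 0.
    have -> : (p1 * b2)^+2 = - ((p1 * b1) * (p2 * b2)) + p1 * b2 * (p1 * b2 + p2 * b1) by ring.
    by rewrite h1 h3 !mul0r mulr0 oppr0 addr0.
  by move/eqP; rewrite sqrf_eq0 => /eqP.
have h5 : p2 * b1 = 0 by move: h3; rewrite h4 add0r.
have [->|p1n] := eqVneq p1 0.
  have [->|p2n] := eqVneq p2 0; first by left.
  by right; split; apply/eqP; [move/eqP: h5 | move/eqP: h2]; rewrite mulf_eq0 (negPf p2n).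
right; split; apply/eqP.
  by move/eqP: h1; rewrite mulf_eq0 (negPf p1n).
by move/eqP: h4; rewrite mulf_eq0 (negPf p1n).
Qed.

Lemma par2 (R : rcfType) (a1 a2 b1 b2 : R) : a1^+2 + a2^+2 != 0 ->
  a1 * b2 - a2 * b1 = 0 -> exists2 β, b1 = β * a1 & b2 = β * a2.
Proof.
move=> A2n k; exists ((a1 * b1 + a2 * b2) / (a1^+2 + a2^+2)).
  rewrite mulrAC; apply: (canRL (mulfK A2n)).
  have -> : b1 * (a1 ^+ 2 + a2 ^+ 2) = (a1 * b1 + a2 * b2) * a1 - a2 * (a1 * b2 - a2 * b1) by ring.
  by rewrite k mulr0 subr0.
rewrite mulrAC; apply: (canRL (mulfK A2n)).
have -> : b2 * (a1 ^+ 2 + a2 ^+ 2) = (a1 * b1 + a2 * b2) * a2 + a1 * (a1 * b2 - a2 * b1) by ring.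
by rewrite k mulr0 addr0.
Qed.

Lemma wzero (R : rcfType) (a1 a2 w1 w2 : R) : a1^+2 + a2^+2 != 0 ->
  a1 * w1 = 0 -> a2 * w2 = 0 -> a1 * w2 + a2 * w1 = 0 -> w1 = 0 /\ w2 = 0.
Proof.
move=> A2n h1 h2 h3; split.
  have : (a1^+2 + a2^+2) * w1 = 0.
    have -> : (a1^+2 + a2^+2) * w1 = a1 * (a1 * w1) + a2 * (a1 * w2 + a2 * w1) - a1 * (a2 * w2) by ring.
    by rewrite h1 h2 h3 !mulr0 subr0 addr0.
  by move/eqP; rewrite mulf_eq0 (negPf A2n) => /eqP.
have : (a1^+2 + a2^+2) * w2 = 0.
  have -> : (a1^+2 + a2^+2) * w2 = a2 * (a2 * w2) + a1 * (a1 * w2 + a2 * w1) - a2 * (a1 * w1) by ring.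
  by rewrite h1 h2 h3 !mulr0 subr0 addr0.
by move/eqP; rewrite mulf_eq0 (negPf A2n) => /eqP.
Qed.

Lemma core (R : rcfType) (a1 a2 b1 b2 p1 p2 q1 q2 c : R) :
  c = a1 * p1 + a2 * p2 + b1 * q1 + b2 * q2 ->
  (a1 + 3 * b1) * (p1 + 3 * q1) = 10 * c ->
  (a1 - 3 * b1) * (p1 - 3 * q1) = 10 * c ->
  (-8 * a1 + 12 * a2 - 2 * b1 + 3 * b2) * (-8 * p1 + 12 * p2 - 2 * q1 + 3 * q2) = 221 * c ->
  (-8 * a1 + 12 * a2 + 2 * b1 - 3 * b2) * (-8 * p1 + 12 * p2 + 2 * q1 - 3 * q2) = 221 * c ->
  (-2 * a1 + 4 * a2 - b1 + 2 * b2) * (-2 * p1 + 4 * p2 - q1 + 2 * q2) = 25 * c ->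
  (-2 * a1 + 4 * a2 + b1 - 2 * b2) * (-2 * p1 + 4 * p2 + q1 - 2 * q2) = 25 * c ->
  (a1 = 0 /\ a2 = 0 /\ b1 = 0 /\ b2 = 0) \/ (p1 = 0 /\ p2 = 0 /\ q1 = 0 /\ q2 = 0).
Proof.
move=> hc h1 h2 h3 h4 h5 h6.
have eM11 : a1 * q1 + p1 * b1 = 0 by nra.
have S1 : a1 * p1 + 9 * (b1 * q1) = 10 * c by nra.
have D2 : 4 * (a1 * q1 + p1 * b1) + 9 * (a2 * q2 + p2 * b2) - 6 * (a1 * q2 + a2 * q1 + p1 * b2 + p2 * b1) = 0 by nra.
have S2 : 16 * ((-2 * a1+3 * a2) * (-2 * p1+3 * p2)) + (-2 * b1+3 * b2) * (-2 * q1+3 * q2) = 221 * c by nra.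
have D3 : (a1 * q1 + p1 * b1) + 4 * (a2 * q2 + p2 * b2) - 2 * (a1 * q2 + a2 * q1 + p1 * b2 + p2 * b1) = 0 by nra.
have S3 : 4 * ((-a1+2 * a2) * (-p1+2 * p2)) + (-b1+2 * b2) * (-q1+2 * q2) = 25 * c by nra.
have eM22 : a2 * q2 + p2 * b2 = 0 by lra.
have eMs : a1 * q2 + a2 * q1 + p1 * b2 + p2 * b1 = 0 by lra.
have key : (a1 * b2 - a2 * b1) * (a2 * p1 - a1 * p2) = 0.
  have E : 2 * ((a1 * b2 - a2 * b1) * (a2 * p1 - a1 * p2)) =
    (a1^+2 - a2^+2) * ((a1 * q1 + p1 * b1) - (a2 * q2 + p2 * b2))
    + 2 * a1 * a2 * (a1 * q2 + a2 * q1 + p1 * b2 + p2 * b1)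
    - (a1^+2 + a2^+2) * ((a1 * q1 + p1 * b1) + (a2 * q2 + p2 * b2)) by ring.
  move: E; rewrite eM11 eM22 eMs !(subr0, mulr0, add0r, addr0, sub0r, subrr, oppr0).
  by move/eqP; rewrite mulf_eq0 pnatr_eq0 /= => /eqP.
have [a0|an] := boolP ((a1 == 0) && (a2 == 0)).
  move/andP: a0 => [/eqP ea1 /eqP ea2]; subst a1 a2.
  have [[ep1 ep2]|[eb1 eb2]] : (p1 = 0 /\ p2 = 0) \/ (b1 = 0 /\ b2 = 0).
    apply: prod4_eq0; lra.
  - subst p1 p2.
    have z1 : b1 * q1 = 0 by nra.
    have z2 : b2 * q2 = 0 by nra.
    have z3 : b1 * q2 + b2 * q1 = 0 by nra.
    have [[eb1 eb2]|[eq1 eq2]] := prod4_eq0 z1 z2 z3.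
      by left.
    by right.
  - by left.
have A2n : a1^+2 + a2^+2 != 0.
  apply: contra an => /eqP h; apply/andP; split; apply/eqP; nra.
have [ki|kii] : a1 * p2 - a2 * p1 = 0 \/ a1 * b2 - a2 * b1 = 0.
  move/eqP: key; rewrite mulf_eq0 => /orP[/eqP k|/eqP k]; [right|left]; lra.
- have [α hp1 hp2] := par2 A2n ki; subst p1 p2.
  have [w1 w2] : q1 + α * b1 = 0 /\ q2 + α * b2 = 0.
    apply: (wzero A2n); lra.
  have hq1 : q1 = - α * b1 by lra.
  have hq2 : q2 = - α * b2 by lra.
  subst q1 q2.
  have br1 : α * (a1^+2 - 9 * b1^+2 - 10 * (a1^+2 + a2^+2 - b1^+2 - b2^+2)) = 0 by lra.
  have br2 : α * (16 * (-2 * a1 + 3 * a2)^+2 - (-2 * b1 + 3 * b2)^+2 - 221 * (a1^+2 + a2^+2 - b1^+2 - b2^+2)) = 0 by lra.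
  have br3 : α * (4 * (- a1 + 2 * a2)^+2 - (- b1 + 2 * b2)^+2 - 25 * (a1^+2 + a2^+2 - b1^+2 - b2^+2)) = 0 by lra.
  have pd : α * (41 * a1^+2 - 96 * a1 * a2 + 57 * a2^+2 + 65 * b1^+2 - 12 * b1 * b2 + 6 * b2^+2) = 0 by lra.
  move/eqP: pd; rewrite mulf_eq0 => /orP[/eqP ->|/eqP pd].
    by right; rewrite !mul0r !oppr0 !mul0r.
  exfalso; move/negP: A2n; apply; apply/eqP.
  have := sqr_ge0 (41 * a1 - 48 * a2); have := sqr_ge0 a2; have := sqr_ge0 a1.
  have := sqr_ge0 (65 * b1 - 6 * b2); have := sqr_ge0 b2.
  nra.
- have [β hb1 hb2] := par2 A2n kii; subst b1 b2.
  have [w1 w2] : q1 + β * p1 = 0 /\ q2 + β * p2 = 0.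
    apply: (wzero A2n); lra.
  have hq1 : q1 = - β * p1 by lra.
  have hq2 : q2 = - β * p2 by lra.
  subst q1 q2.
  pose t := β^+2.
  have R1 : (1 - 9 * t) * (a1 * p1) - 10 * (1 - t) * (a1 * p1 + a2 * p2) = 0 by rewrite /t; lra.
  have R2 : (16 - t) * (4 * (a1 * p1) + 9 * (a2 * p2) - 6 * (a1 * p2 + a2 * p1)) - 221 * (1 - t) * (a1 * p1 + a2 * p2) = 0 by rewrite /t; lra.
  have R3 : (4 - t) * ((a1 * p1) + 4 * (a2 * p2) - 2 * (a1 * p2 + a2 * p1)) - 25 * (1 - t) * (a1 * p1 + a2 * p2) = 0 by rewrite /t; lra.
  have t0 : 0 <= t by rewrite /t; exact: sqr_ge0.
  have Dn : ((-5368) + (9172) * t + (-3362) * t^+2 + (-2602) * t^+3) != 0.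
    apply/eqP => hD.
    have E : 16 * ((-5368) + (9172) * t + (-3362) * t^+2 + (-2602) * t^+3) =
      - (2602 * (t * (4 * t - 3)^+2) + 7265 * (4 * t - 3)^+2 + 4190 * t + 20503) by ring.
    move: E; rewrite hD mulr0 => /esym/eqP; rewrite oppr_eq0; apply/negP.
    have g1 := sqr_ge0 (4 * t - 3); have g2 := mulr_ge0 t0 g1.
    apply: lt0r_neq0; lra.
  have X1 : (a1 * p1) = 0.
    have E : ((-5368) + (9172) * t + (-3362) * t^+2 + (-2602) * t^+3) * (a1 * p1) = ((-248) + (220) * t + (298) * t^+2) * ((1 - 9 * t) * (a1 * p1) - 10 * (1 - t) * (a1 * p1 + a2 * p2)) + ((-80) + (100) * t + (-20) * t^+2) * ((16 - t) * (4 * (a1 * p1) + 9 * (a2 * p2) - 6 * (a1 * p2 + a2 * p1)) - 221 * (1 - t) * (a1 * p1 + a2 * p2)) + ((960) + (-1020) * t + (60) * t^+2) * ((4 - t) * ((a1 * p1) + 4 * (a2 * p2) - 2 * (a1 * p2 + a2 * p1)) - 25 * (1 - t) * (a1 * p1 + a2 * p2)) by rewrite /t; ring.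
    move: E; rewrite R1 R2 R3 !mulr0 !addr0 => /eqP; rewrite mulf_eq0 (negPf Dn) => /eqP //.
  have X2 : (a2 * p2) = 0.
    have E : ((-5368) + (9172) * t + (-3362) * t^+2 + (-2602) * t^+3) * (a2 * p2) = ((760) + (-380) * t + (-290) * t^+2) * ((1 - 9 * t) * (a1 * p1) - 10 * (1 - t) * (a1 * p1 + a2 * p2)) + ((72) + (-26) * t + (2) * t^+2) * ((16 - t) * (4 * (a1 * p1) + 9 * (a2 * p2) - 6 * (a1 * p2 + a2 * p1)) - 221 * (1 - t) * (a1 * p1 + a2 * p2)) + ((-864) + (150) * t + (-6) * t^+2) * ((4 - t) * ((a1 * p1) + 4 * (a2 * p2) - 2 * (a1 * p2 + a2 * p1)) - 25 * (1 - t) * (a1 * p1 + a2 * p2)) by rewrite /t; ring.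
    move: E; rewrite R1 R2 R3 !mulr0 !addr0 => /eqP; rewrite mulf_eq0 (negPf Dn) => /eqP //.
  have X3 : (a1 * p2 + a2 * p1) = 0.
    have E : ((-5368) + (9172) * t + (-3362) * t^+2 + (-2602) * t^+3) * (a1 * p2 + a2 * p1) = ((-204) + (1050) * t + (-531) * t^+2) * ((1 - 9 * t) * (a1 * p1) - 10 * (1 - t) * (a1 * p1 + a2 * p2)) + ((129) + (-252) * t + (219) * t^+2) * ((16 - t) * (4 * (a1 * p1) + 9 * (a2 * p2) - 6 * (a1 * p2 + a2 * p1)) - 221 * (1 - t) * (a1 * p1 + a2 * p2)) + ((-877) + (1755) * t + (-1958) * t^+2) * ((4 - t) * ((a1 * p1) + 4 * (a2 * p2) - 2 * (a1 * p2 + a2 * p1)) - 25 * (1 - t) * (a1 * p1 + a2 * p2)) by rewrite /t; ring.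
    move: E; rewrite R1 R2 R3 !mulr0 !addr0 => /eqP; rewrite mulf_eq0 (negPf Dn) => /eqP //.
  have [[ea1 ea2]|[ep1 ep2]] := prod4_eq0 X1 X2 X3.
    by exfalso; move/negP: A2n; apply; rewrite ea1 ea2 expr0n /= addr0.
  by right; rewrite ep1 ep2 !mulr0.
Qed.

Notation i0 := (@Ordinal 4 0 isT).
Notation i1 := (@Ordinal 4 1 isT).
Notation i2 := (@Ordinal 4 2 isT).
Notation i3 := (@Ordinal 4 3 isT).

Lemma sum4 (R : rcfType) (f : 'I_4 -> R) : \sum_(i < 4) f i = f i0 + f i1 + f i2 + f i3.
Proof.
rewrite !big_ord_recr big_ord0 /= add0r.
by congr (_ + _ + _ + _); congr f; apply: val_inj.
Qed.

Lemma dotv4 (R : rcfType) (x y : 'rV[R]_4) :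
  dotv x y = x 0 i0 * y 0 i0 + x 0 i1 * y 0 i1 + x 0 i2 * y 0 i2 + x 0 i3 * y 0 i3.
Proof. by rewrite /dotv mxE sum4 !mxE. Qed.

Definition mk4 (R : rcfType) (a b c d : R) : 'rV[R]_4 := \row_(j < 4) [:: a; b; c; d]`_j.

Lemma mk4E (R : rcfType) (a b c d : R) :
  [/\ mk4 a b c d 0 i0 = a, mk4 a b c d 0 i1 = b, mk4 a b c d 0 i2 = c & mk4 a b c d 0 i3 = d].
Proof. by rewrite !mxE. Qed.

Lemma vnorm4 (R : rcfType) (x : 'rV[R]_4) :
  vnorm x = Num.sqrt (x 0 i0 ^+ 2 + x 0 i1 ^+ 2 + x 0 i2 ^+ 2 + x 0 i3 ^+ 2).
Proof. by rewrite /vnorm sum4. Qed.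

Lemma row4P (R : rcfType) (x y : 'rV[R]_4) :
  x 0 i0 = y 0 i0 -> x 0 i1 = y 0 i1 -> x 0 i2 = y 0 i2 -> x 0 i3 = y 0 i3 -> x = y.
Proof.
move=> h0 h1 h2 h3; apply/rowP => j.
case: j => [[|[|[|[|j]]]] hj] //.
- by rewrite (_ : Ordinal hj = i0) //; apply: val_inj.
- by rewrite (_ : Ordinal hj = i1) //; apply: val_inj.
- by rewrite (_ : Ordinal hj = i2) //; apply: val_inj.
- by rewrite (_ : Ordinal hj = i3) //; apply: val_inj.
Qed.

Lemma hyper_poly (R : rcfType) (n x y : 'rV[R]_4) : n != 0 ->
  vnorm (x *m orth_proj (Wof n)) = vnorm (y *m orth_proj (Wof n)) ->
  dotv n n * dotv x x - dotv x n ^+ 2 = dotv n n * dotv y y - dotv y n ^+ 2.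
Proof.
move=> nz; rewrite !proj_hyper // !vnorm4.
have N0 := dotv_gt0 nz.
have Nn : dotv n n != 0 by rewrite gt_eqF.
have key (z : 'rV[R]_4) : (z - (dotv z n / dotv n n) *: n) 0 i0 ^+ 2
   + (z - (dotv z n / dotv n n) *: n) 0 i1 ^+ 2
   + (z - (dotv z n / dotv n n) *: n) 0 i2 ^+ 2
   + (z - (dotv z n / dotv n n) *: n) 0 i3 ^+ 2
   = (dotv n n * dotv z z - dotv z n ^+ 2) / dotv n n.
  move: Nn; rewrite !mxE !dotv4 => Nn; field; exact: Nn.
move=> h; have := congr1 (fun r => r ^+ 2) h.
rewrite !sqr_sqrtr ?addr_ge0 ?sqr_ge0 // !key => h2.
by have := congr1 (fun r => r * dotv n n) h2; rewrite !divfK.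
Qed.

Lemma line_eq (R : rcfType) (n x y : 'rV[R]_4) : n != 0 ->
  dotv x n ^+ 2 = dotv y n ^+ 2 ->
  vnorm (x *m orth_proj (orth_compl (Wof n))) = vnorm (y *m orth_proj (orth_compl (Wof n))).
Proof.
move=> nz h; rewrite !proj_line // !vnorm4 !mxE.
by rewrite !exprMn h.
Qed.

Definition nv (R : rcfType) (i : 'I_6) : 'rV[R]_4 :=
  nth 0 [:: mk4 1 0 3 0; mk4 1 0 (-3) 0; mk4 (-8) 12 (-2) 3; mk4 (-8) 12 2 (-3);
            mk4 (-2) 4 (-1) 2; mk4 (-2) 4 1 (-2)] i.

Lemma nv_nz (R : rcfType) (i : 'I_6) : nv R i != 0.
Proof.
apply/eqP => h; have := congr1 (fun v : 'rV[R]_4 => v 0 i0) h.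
case: i h => [[|[|[|[|[|[|i]]]]]] hi] //= h; rewrite !mxE /=; lra.
Qed.

Unset Implicit Arguments.

Theorem mainTheorem9 (R : realType) :
  exists W : 'I_6 -> 'M[R]_4,
    (forall i, \rank (W i) = 3%N) /\
    (forall i, \rank (orth_compl (W i)) = 1%N) /\
    does_phase_retrieval W /\
    ~ does_phase_retrieval (fun i => orth_compl (W i)).
Proof.
exists (fun i => Wof (nv R i)).
split; first by move=> i; rewrite rank_Wof ?nv_nz.
split; first by move=> i; rewrite /orth_compl mxrank_ker mxrank_tr rank_Wof ?nv_nz.
split.
  move=> x y H.
  have E i := hyper_poly (nv_nz R i) (H i).
  have E0 := E (@Ordinal 6 0 isT); have E1 := E (@Ordinal 6 1 isT).
  have E2 := E (@Ordinal 6 2 isT); have E3 := E (@Ordinal 6 3 isT).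
  have E4 := E (@Ordinal 6 4 isT); have E5 := E (@Ordinal 6 5 isT).
  move: E0 E1 E2 E3 E4 E5; rewrite /nv /= !dotv4 !mxE /= => E0 E1 E2 E3 E4 E5.
  have := @core R (x 0 i0 - y 0 i0) (x 0 i1 - y 0 i1) (x 0 i2 - y 0 i2) (x 0 i3 - y 0 i3)
     (x 0 i0 + y 0 i0) (x 0 i1 + y 0 i1) (x 0 i2 + y 0 i2) (x 0 i3 + y 0 i3) _ erefl.
  case.
  - lra.
  - lra.
  - lra.
  - lra.
  - lra.
  - lra.
  - move=> [h0 [h1 [h2 h3]]]; left; apply: row4P; lra.
  - move=> [h0 [h1 [h2 h3]]]; right; apply: row4P; rewrite !mxE; lra.
move=> H.
have := H (mk4 2 2 8 0) (mk4 2 0 8 8).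
case.
- move=> i; apply: (line_eq (nv_nz R i)).
  case: i => [[|[|[|[|[|[|i]]]]]] hi] //=; rewrite !dotv4 !mxE /=; ring.
- move=> h; have := congr1 (fun v : 'rV[R]_4 => v 0 i1) h; rewrite !mxE /=; lra.
- move=> h; have := congr1 (fun v : 'rV[R]_4 => v 0 i0) h; rewrite !mxE /=; lra.
Qed.
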